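(* In the setting below, if $\eta \geq \eta_0$, then $|\tilde{w}_t| \leq \eta$ for all integers $0 \le t < \tau$.
   Context: Dimension $d=2$. Data $x_1,\dots,x_n\in\mathbb{R}^2$ with $\|x_i\|\le 1$, linearly separable (some $w$ has $\langle w,x_i\rangle>0$ for all $i$). $F(w) = \frac{1}{n}\sum_{i=1}^n \log(1+\exp(-\langle w, x_i\rangle))$. Maximum margin $\gamma = \max_{\|w\|=1}\min_i \langle w, x_i\rangle$ with maximizer the unit vector $w_*$; $v_*$ is a fixed unit vector orthogonal to $w_*$. Gradient descent: $w_0=0$, $w_{t+1} = w_t - \eta\nabla F(w_t)$ with constant $\eta>0$. $\tilde{w}_t = \langle w_t, v_*\rangle$. $\tau = \min\{t\ge 0: F(w_t)\le 1/(8\eta)\}$. $\eta_0 = \max(n, \frac{32}{\gamma^2}\log\frac{256}{\gamma^2})$. *)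

(* Defs.v *)
From Stdlib Require Import Reals Lra.
Open Scope R_scope.

Definition vec2 := (R * R)%type.
Definition dot (u v : vec2) : R := fst u * fst v + snd u * snd v.
Definition vnorm (u : vec2) : R := sqrt (dot u u).
Definition vsub (u v : vec2) : vec2 := (fst u - fst v, snd u - snd v).
Definition vscale (a : R) (u : vec2) : vec2 := (a * fst u, a * snd u).
Definition vzero : vec2 := (0, 0).

Fixpoint rsum (n : nat) (f : nat -> R) : R :=
  match n with O => 0 | S k => rsum k f + f k end.

Definition logistic_risk (n : nat) (x : nat -> vec2) (w : vec2) : R :=
  / INR n * rsum n (fun i => ln (1 + exp (- dot w (x i)))).

Definition is_gradient (F : vec2 -> R) (g : vec2 -> vec2) : Prop :=
  forall w : vec2,
    derivable_pt_lim (fun a => F (a, snd w)) (fst w) (fst (g w)) /\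
    derivable_pt_lim (fun b => F (fst w, b)) (snd w) (snd (g w)).

Definition is_min_margin (n : nat) (x : nat -> vec2) (w : vec2) (gamma : R) : Prop :=
  (forall i, (i < n)%nat -> gamma <= dot w (x i)) /\
  (exists i, (i < n)%nat /\ dot w (x i) = gamma).

Definition is_max_margin (n : nat) (x : nat -> vec2) (wstar : vec2) (gamma : R) : Prop :=
  vnorm wstar = 1 /\ is_min_margin n x wstar gamma /\
  (forall w g, vnorm w = 1 -> is_min_margin n x w g -> g <= gamma).

(* Main.v *)
Require Import Defs.
From Stdlib Require Import Reals Lra Lia Psatz Classical.
From Coquelicot Require Import Coquelicot.
Open Scope R_scope.


Lemma rsum_ext n f g : (forall i, (i < n)%nat -> f i = g i) -> rsum n f = rsum n g.
Proof. induction n; simpl; intros H; auto. rewrite IHn by (intros; apply H; lia). rewrite H by lia. auto. Qed.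

Lemma rsum_plus n f g : rsum n (fun i => f i + g i) = rsum n f + rsum n g.
Proof. induction n; simpl; [lra|]. rewrite IHn; lra. Qed.

Lemma rsum_scal n c f : rsum n (fun i => c * f i) = c * rsum n f.
Proof. induction n; simpl; [lra|]. rewrite IHn; lra. Qed.

Lemma rsum_le n f g : (forall i, (i < n)%nat -> f i <= g i) -> rsum n f <= rsum n g.
Proof. induction n; simpl; intros H; [lra|]. assert (f n <= g n) by (apply H; lia).
 assert (rsum n f <= rsum n g) by (apply IHn; intros; apply H; lia). lra. Qed.

Lemma rsum_const n c : rsum n (fun _ => c) = INR n * c.
Proof. induction n; simpl rsum; [simpl; lra|]. rewrite IHn, S_INR; lra. Qed.

Lemma rsum_nonneg n f : (forall i, (i < n)%nat -> 0 <= f i) -> 0 <= rsum n f.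
Proof. intros H. rewrite <- (Rmult_0_r (INR n)), <- rsum_const. apply rsum_le. auto. Qed.

Lemma rsum_ge_term n f j : (forall i, (i < n)%nat -> 0 <= f i) -> (j < n)%nat -> f j <= rsum n f.
Proof. induction n; simpl; intros H Hj; [lia|].
 destruct (Nat.eq_dec j n).
 - subst. assert (0 <= rsum n f) by (apply rsum_nonneg; intros; apply H; lia). lra.
 - assert (f j <= rsum n f) by (apply IHn; [intros; apply H; lia| lia]).
   assert (0 <= f n) by (apply H; lia). lra. Qed.

Definition sg (z : R) : R := exp (- z) / (1 + exp (- z)).

Lemma sg_pos z : 0 < sg z.
Proof. unfold sg. pose proof (exp_pos (-z)). apply Rdiv_lt_0_compat; lra. Qed.

Lemma sg_le_exp z : sg z <= exp (- z).
Proof. unfold sg. pose proof (exp_pos (-z)). apply Rmult_le_reg_r with (1 + exp (-z)); [lra|].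
 field_simplify; nra. Qed.

Lemma sg_alt z : sg z = / (1 + exp z).
Proof. unfold sg. rewrite exp_Ropp. pose proof (exp_pos z). field. lra. Qed.

Lemma sg_le1 z : sg z <= 1.
Proof. rewrite sg_alt. pose proof (exp_pos z). rewrite <- Rinv_1. apply Rinv_le_contravar; lra. Qed.

Lemma sg_anti z1 z2 : z1 <= z2 -> sg z2 <= sg z1.
Proof. intros H. rewrite !sg_alt. pose proof (exp_pos z1).
 apply Rinv_le_contravar; [lra|]. pose proof (exp_increasing z1 z2). destruct (Req_dec z1 z2); subst; lra. Qed.

Lemma sg_half z : 0 <= z -> sg z <= /2.
Proof. intros H. replace (/2) with (sg 0). apply sg_anti; auto. rewrite sg_alt, exp_0. field. Qed.

Lemma sg_ge_half z : z <= 0 -> /2 <= sg z.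
Proof. intros H. replace (/2) with (sg 0). apply sg_anti; auto. rewrite sg_alt, exp_0. field. Qed.

Lemma ln1p_le y : 0 <= y -> ln (1 + y) <= y.
Proof. intros H. rewrite <- (ln_exp y) at 2. apply ln_le; [lra|]. apply exp_ineq1_le. Qed.

Lemma sg_ge_loss z : 0 <= z -> ln (1 + exp (- z)) / 2 <= sg z.
Proof. intros H. pose proof (ln1p_le (exp (-z)) (Rlt_le _ _ (exp_pos _))).
 assert (exp (-z) <= 1) by (rewrite <- exp_0; apply exp_le_3 || (destruct (Req_dec z 0); [subst; rewrite Ropp_0; lra| left; apply exp_increasing; lra])).
 unfold sg. pose proof (exp_pos (-z)).
 apply Rle_trans with (exp (-z) / 2); [lra|]. apply Rmult_le_compat_l; [lra|]. apply Rinv_le_contravar; lra. Qed.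


Lemma term_deriv (P Q y0 : R) :
  is_derive (fun y => ln (1 + exp (- (Q + y * P)))) y0 (- P * sg (Q + y0 * P)).
Proof.
  auto_derive.
  - pose proof (exp_pos (- (Q + y0 * P))). lra.
  - unfold sg. pose proof (exp_pos (- (Q + y0 * P))). field. lra.
Qed.

Lemma sum_deriv n (P Q : nat -> R) (y0 : R) :
  is_derive (fun y => rsum n (fun i => ln (1 + exp (- (Q i + y * P i))))) y0
            (rsum n (fun i => - P i * sg (Q i + y0 * P i))).
Proof.
  induction n; simpl.
  - apply (is_derive_const 0).
  - apply (is_derive_plus (fun y => rsum n (fun i => ln (1 + exp (- (Q i + y * P i)))))
       (fun y => ln (1 + exp (- (Q n + y * P n))))); auto. apply term_deriv.
Qed.

Lemma grad_fst n x grad (Hgrad : is_gradient (logistic_risk n x) grad) (u : vec2) :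
  fst (grad u) = / INR n * rsum n (fun i => - fst (x i) * sg (dot u (x i))).
Proof.
  destruct (Hgrad u) as [H1 _].
  apply (uniqueness_limite _ _ _ _ H1). apply is_derive_Reals.
  unfold logistic_risk. apply is_derive_scal.
  replace (rsum n (fun i => - fst (x i) * sg (dot u (x i)))) with
    (rsum n (fun i => - fst (x i) * sg (snd u * snd (x i) + fst u * fst (x i)))).
  2:{ apply rsum_ext. intros i _. unfold dot. f_equal. f_equal. try ring. }
  eapply is_derive_ext; [| apply (sum_deriv n (fun i => fst (x i)) (fun i => snd u * snd (x i)))].
  intros t. simpl. apply rsum_ext. intros i _. unfold dot; simpl. f_equal. f_equal. f_equal. f_equal. ring.
Qed.

Lemma grad_snd n x grad (Hgrad : is_gradient (logistic_risk n x) grad) (u : vec2) :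
  snd (grad u) = / INR n * rsum n (fun i => - snd (x i) * sg (dot u (x i))).
Proof.
  destruct (Hgrad u) as [_ H1].
  apply (uniqueness_limite _ _ _ _ H1). apply is_derive_Reals.
  unfold logistic_risk. apply is_derive_scal.
  replace (rsum n (fun i => - snd (x i) * sg (dot u (x i)))) with
    (rsum n (fun i => - snd (x i) * sg (fst u * fst (x i) + snd u * snd (x i)))).
  2:{ apply rsum_ext. intros i _. unfold dot. reflexivity. }
  eapply is_derive_ext; [| apply (sum_deriv n (fun i => snd (x i)) (fun i => fst u * fst (x i)))].
  intros t. simpl. apply rsum_ext. intros i _. unfold dot; simpl. reflexivity.
Qed.


Lemma vnorm1 u : vnorm u = 1 -> dot u u = 1.
Proof. unfold vnorm. intros H. assert (0 <= dot u u) by (unfold dot; nra).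
 rewrite <- (sqrt_sqrt (dot u u)) by auto. rewrite H. ring. Qed.

Lemma vnorm_le1 u : vnorm u <= 1 -> dot u u <= 1.
Proof. unfold vnorm. intros H. assert (0 <= dot u u) by (unfold dot; nra).
 rewrite <- (sqrt_sqrt (dot u u)) by auto. pose proof (sqrt_pos (dot u u)). nra. Qed.

Lemma decomp (W V : vec2) : dot W W = 1 -> dot V V = 1 -> dot V W = 0 ->
  forall u y, dot u y = dot u W * dot W y + dot u V * dot V y.
Proof.
  destruct W as [p q], V as [r s]. unfold dot; simpl. intros H1 H2 H3 [u1 u2] [y1 y2]; simpl.
  set (l := p * s - q * r).
  assert (Hr : r = - l * q). { assert (E: r - (- l*q) = p*(r*p + s*q) - r*(p*p+q*q - 1)) by (unfold l; ring). rewrite H3, H1 in E. lra. }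
  assert (Hs : s = l * p). { assert (E: s - l*p = q*(r*p + s*q) - s*(p*p+q*q - 1)) by (unfold l; ring). rewrite H3, H1 in E. lra. }
  assert (Hl : l * l = 1). { rewrite Hr, Hs in H2. nra. }
  rewrite Hr, Hs. 
  replace ((u1 * p + u2 * q) * (p * y1 + q * y2) + (u1 * (- l * q) + u2 * (l * p)) * (- l * q * y1 + l * p * y2))
    with ((u1 * p + u2 * q) * (p * y1 + q * y2) + (l*l) * ((u1 * (- q) + u2 * p) * (- q * y1 + p * y2))) by ring.
  rewrite Hl. transitivity ((u1*y1+u2*y2)*(p*p+q*q)); [rewrite H1; ring| ring].
Qed.

Lemma min_exists (f : nat -> R) n : (0 < n)%nat -> exists m, (forall i, (i < n)%nat -> m <= f i) /\ (exists i, (i < n)%nat /\ f i = m).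
Proof.
  induction n; intros Hn; [lia|].
  destruct (Nat.eq_dec n 0).
  - subst. exists (f 0%nat). split; [intros i Hi; replace i with 0%nat by lia; lra| exists 0%nat; split; auto].
  - destruct IHn as [m [Hm [j [Hj Hfj]]]]; [lia|].
    destruct (Rle_dec m (f n)).
    + exists m. split; [intros i Hi; destruct (Nat.eq_dec i n); [subst; auto| apply Hm; lia]| exists j; split; [lia|auto]].
    + exists (f n). split; [intros i Hi; destruct (Nat.eq_dec i n); [subst; lra| specialize (Hm i ltac:(lia)); lra]| exists n; split; [lia|auto]].
Qed.


Definition theta (eta gam a : R) := eta - 1 - 32 / gam ^ 2 * exp (- (gam * a)).

Lemma exp1_ge2 : 2 <= exp 1.
Proof. pose proof (exp_ineq1_le 1). lra. Qed.

Lemma exp_ge_2x x : 0 <= x -> 2 * x <= exp x.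
Proof. intros H. replace x with (1 + (x - 1)) at 2 by ring. rewrite exp_plus.
 pose proof (exp_ineq1_le (x - 1)). pose proof exp1_ge2. pose proof (exp_pos 1). nra. Qed.

Lemma sum_bound n eta (f : nat -> R) U : (0 < n)%nat -> 0 <= eta ->
  (forall i, (i < n)%nat -> f i <= U) -> eta / INR n * rsum n f <= eta * U.
Proof. intros Hn He H. pose proof (rsum_le n f (fun _ => U) H). rewrite rsum_const in H0.
 assert (0 < INR n) by (apply lt_0_INR; lia).
 apply Rle_trans with (eta / INR n * (INR n * U)).
 - apply Rmult_le_compat_l; auto. apply Rmult_le_pos; auto. left; apply Rinv_0_lt_compat; auto.
 - right. field. lra. Qed.


Lemma K_pos (gam : R) (Hg : 0 < gam <= 1) : 0 < 32 / gam ^ 2.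
Proof. apply Rdiv_lt_0_compat; [lra| apply pow_lt; lra]. Qed.

Lemma fin (eta gam : R) (Hg : 0 < gam <= 1) (He : 128 <= eta) (HK : 32 / gam ^ 2 <= eta / 4) (HKe : 32 / gam ^ 2 <= exp (gam ^ 2 * eta / 2)) b' a' : b' <= eta - 2 -> gam * Rabs b' <= a' -> b' <= theta eta gam a'.
Proof.
  intros H1 H2. unfold theta. pose proof (K_pos gam Hg). pose proof (Rabs_pos b').
  assert (0 <= a') by nra.
  destruct (Rle_dec b' (eta / 2)).
  - assert (exp (- (gam * a')) <= 1). { rewrite <- exp_0. destruct (Req_dec (gam*a') 0).
      rewrite H4, Ropp_0; lra. left; apply exp_increasing. nra. }
    assert (32 / gam ^ 2 * exp (- (gam * a')) <= 32 / gam ^ 2) by (pose proof (exp_pos (- (gam*a'))); nra).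
    lra.
  - assert (Hb: eta / 2 <= Rabs b') by (rewrite Rabs_right; lra).
    assert (gam * (gam * Rabs b') <= gam * a') by (apply Rmult_le_compat_l; lra).
    assert (gam * gam * (eta / 2) <= gam * gam * Rabs b') by (apply Rmult_le_compat_l; nra).
    assert (Hga : gam ^ 2 * eta / 2 <= gam * a') by (simpl; lra).
    assert (Hex : exp (- (gam * a')) <= exp (- (gam ^ 2 * eta / 2))).
    { destruct (Req_dec (gam ^ 2 * eta / 2) (gam * a')) as [Q|Q]. rewrite Q; lra. left; apply exp_increasing; lra. }
    rewrite (exp_Ropp (gam ^ 2 * eta / 2)) in Hex. pose proof (exp_pos (gam ^ 2 * eta / 2)).
    assert (32 / gam ^ 2 * / exp (gam ^ 2 * eta / 2) <= 1).
    { apply Rmult_le_reg_r with (exp (gam ^ 2 * eta / 2)); auto. rewrite Rmult_assoc, Rinv_l by lra. lra. }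
    pose proof (exp_pos (- (gam * a'))).
    assert (32 / gam ^ 2 * exp (- (gam * a')) <= 1).
    { eapply Rle_trans; [| eassumption]. apply Rmult_le_compat_l; [left; apply (K_pos gam Hg)| exact Hex]. }
    lra.
Qed.

Lemma core_up (eta gam : R) (Hg : 0 < gam <= 1) (He : 128 <= eta) (HK : 32 / gam ^ 2 <= eta / 4) (HKe : 32 / gam ^ 2 <= exp (gam ^ 2 * eta / 2)) n (al be : nat -> R) (a b : R) :
  (0 < n)%nat ->
  (forall i, (i < n)%nat -> gam <= al i) ->
  (forall i, (i < n)%nat -> Rabs (be i) <= 1) ->
  gam * Rabs b <= a -> b <= theta eta gam a ->
  gam / 16 <= eta / INR n * rsum n (fun i => sg (al i * a + be i * b) * al i) ->
  gam * Rabs (b + eta / INR n * rsum n (fun i => sg (al i * a + be i * b) * be i))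
    <= a + eta / INR n * rsum n (fun i => sg (al i * a + be i * b) * al i) ->
  b + eta / INR n * rsum n (fun i => sg (al i * a + be i * b) * be i)
    <= theta eta gam (a + eta / INR n * rsum n (fun i => sg (al i * a + be i * b) * al i)).
Proof.
  intros Hn Hal Hbe Hab Hb Hinc Hinv.
  set (a' := a + _) in *. set (b' := b + _) in *.
  pose proof (Rabs_pos b). assert (Ha : 0 <= a) by nra.
  assert (Hz : forall i, (i < n)%nat -> gam * a + be i * b <= al i * a + be i * b).
  { intros i Hi. specialize (Hal i Hi). nra. }
  assert (Hbe' : forall i, (i < n)%nat -> -1 <= be i <= 1).
  { intros i Hi. specialize (Hbe i Hi). unfold Rabs in Hbe. destruct (Rcase_abs (be i)); lra. }
  destruct (Rlt_dec b 0) as [Hneg | Hnn].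
  -
    assert (HU : forall i, (i < n)%nat -> sg (al i * a + be i * b) * be i <= sg b).
    { intros i Hi. specialize (Hz i Hi). specialize (Hbe' i Hi). pose proof (sg_pos (al i * a + be i * b)).
      pose proof (sg_pos b).
      destruct (Rle_dec (be i) 0). nra.
      assert (sg (al i * a + be i * b) <= sg b) by (apply sg_anti; nra). nra. }
    pose proof (sum_bound n eta _ _ Hn ltac:(lra) HU).
    apply fin; auto. unfold b'.
    assert (b + eta * sg b <= eta - 2).
    { rewrite sg_alt. pose proof (exp_pos b).
      assert (E: eta - eta * / (1 + exp b) = eta * exp b / (1 + exp b)) by (field; lra).
      destruct (Rle_dec b (-2)).
      + assert (0 <= eta * exp b / (1 + exp b)) by (apply Rmult_le_pos; [nra| left; apply Rinv_0_lt_compat; lra]). lra.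
      + assert (exp (- (2)) <= exp b) by (left; apply exp_increasing; lra).
        assert (exp 2 <= 9). { replace 2 with (1+1) by ring. rewrite exp_plus. pose proof exp_le_3. pose proof (exp_pos 1). nra. }
        assert (/9 <= exp (- (2))). { rewrite exp_Ropp. apply Rinv_le_contravar; auto. apply exp_pos. }
        assert (exp b < 1) by (rewrite <- exp_0; apply exp_increasing; lra).
        assert (eta / 18 <= eta * exp b / (1 + exp b)).
        { unfold Rdiv. rewrite Rmult_assoc. apply Rmult_le_compat_l; [lra|].
          apply Rmult_le_reg_r with (1 + exp b); [lra|]. rewrite Rmult_assoc, Rinv_l by lra. nra. }
        lra. }
    lra.
  - destruct (Rle_dec b (eta / 2 - 2)) as [HB | HCD].
    + assert (HU : forall i, (i < n)%nat -> sg (al i * a + be i * b) * be i <= /2).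
      { intros i Hi. specialize (Hz i Hi). specialize (Hbe' i Hi). pose proof (sg_pos (al i * a + be i * b)).
        destruct (Rle_dec (be i) 0). nra.
        assert (sg (al i * a + be i * b) <= /2) by (apply sg_half; nra). nra. }
      pose proof (sum_bound n eta _ _ Hn ltac:(lra) HU).
      apply fin; auto. unfold b'. lra.
    + assert (Hbpos : eta / 4 <= b) by lra.
      assert (HU : forall i, (i < n)%nat -> sg (al i * a + be i * b) * be i <= exp (- (gam * a)) / (2 * b)).
      { intros i Hi. specialize (Hz i Hi). specialize (Hbe' i Hi). pose proof (sg_pos (al i * a + be i * b)).
        pose proof (exp_pos (- (gam * a))).
        assert (0 <= exp (- (gam * a)) / (2 * b)) by (apply Rmult_le_pos; [lra| left; apply Rinv_0_lt_compat; lra]).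
        destruct (Rle_dec (be i) 0). nra.
        pose proof (sg_le_exp (al i * a + be i * b)).
        assert (exp (- (al i * a + be i * b)) <= exp (- (gam * a)) * exp (- (be i * b))).
        { rewrite <- exp_plus. destruct (Req_dec (- (al i * a + be i * b)) (- (gam * a) + - (be i * b))) as [Q|Q].
          rewrite Q; lra. left; apply exp_increasing; lra. }
        assert (be i * exp (- (be i * b)) <= / (2 * b)).
        { pose proof (exp_ge_2x (be i * b) ltac:(nra)). rewrite exp_Ropp. pose proof (exp_pos (be i * b)).
          apply Rmult_le_reg_r with (2 * b * exp (be i * b)). nra.
          field_simplify; try lra; try nra. }
        pose proof (exp_pos (- (be i * b))).
        unfold Rdiv. nra. }
      pose proof (sum_bound n eta _ _ Hn ltac:(lra) HU).
      pose proof (exp_pos (- (gam * a))).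
      assert (Heq : eta * (exp (- (gam * a)) / (2 * b)) = exp (- (gam * a)) * (eta / (2 * b))) by (field; lra).
      destruct (Rle_dec b (eta / 2)) as [HC | HD].
      * apply fin; auto. unfold b'.
        assert (eta / (2 * b) <= 2).
        { apply Rmult_le_reg_r with (2 * b). lra. field_simplify; lra. }
        assert (exp (- (gam * a)) <= 1). { rewrite <- exp_0. destruct (Req_dec (gam*a) 0) as [Q|Q].
          rewrite Q, Ropp_0; lra. left; apply exp_increasing. nra. }
        assert (0 <= eta / (2*b)) by (apply Rmult_le_pos; [lra| left; apply Rinv_0_lt_compat; lra]).
        nra.
      * assert (eta / (2 * b) <= 1).
        { apply Rmult_le_reg_r with (2 * b). lra. field_simplify; lra. }
        assert (Hb'1 : b' <= b + exp (- (gam * a))) by (unfold b'; nra).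
        assert (Hda : gam / 16 <= a' - a) by (unfold a'; lra).
        set (E := exp (- (gam * a))) in *.
        set (r := exp (- (gam * (a' - a)))).
        assert (Hr : exp (- (gam * a')) = E * r).
        { unfold E, r. rewrite <- exp_plus. f_equal. ring. }
        assert (Hr1 : r * (1 + gam ^ 2 / 16) <= 1).
        { unfold r. rewrite exp_Ropp. pose proof (exp_pos (gam * (a' - a))).
          assert (1 + gam ^ 2 / 16 <= exp (gam * (a' - a))).
          { pose proof (exp_ineq1_le (gam ^ 2 / 16)).
            assert (Q1 : gam ^ 2 / 16 <= gam * (a' - a)) by (simpl; nra).
            destruct (Req_dec (gam ^ 2 / 16) (gam * (a' - a))) as [Q|Q]. rewrite <- Q; lra.
            assert (Q2 : gam ^ 2 / 16 < gam * (a' - a)) by lra.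
            pose proof (exp_increasing _ _ Q2). lra. }
          apply Rmult_le_reg_r with (exp (gam * (a' - a))); auto.
          rewrite Rmult_assoc, (Rmult_comm (1 + _)), <- Rmult_assoc, Rinv_l by lra. nra. }
        assert (Hr0 : 0 < r) by apply exp_pos.
        unfold theta in *. rewrite Hr.
        assert (HKr : 1 + 32 / gam ^ 2 * r <= 32 / gam ^ 2).
        { assert (Hg2 : 0 < gam ^ 2) by (apply pow_lt; lra).
          assert (gam ^ 2 <= 1) by (simpl; nra).
          apply Rmult_le_reg_r with (gam ^ 2); auto.
          field_simplify; try lra. nra. }
        assert (HE0 : 0 < E) by (unfold E; apply exp_pos).
        assert (E * (1 + 32 / gam ^ 2 * r) <= E * (32 / gam ^ 2)) by (apply Rmult_le_compat_l; lra).
        fold E in Hb. lra.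
Qed.
Lemma core_down (eta gam : R) (Hg : 0 < gam <= 1) (He : 128 <= eta) (HK : 32 / gam ^ 2 <= eta / 4) (HKe : 32 / gam ^ 2 <= exp (gam ^ 2 * eta / 2)) n (al be : nat -> R) (a b : R) :
  (0 < n)%nat ->
  (forall i, (i < n)%nat -> gam <= al i) ->
  (forall i, (i < n)%nat -> Rabs (be i) <= 1) ->
  gam * Rabs b <= a -> - b <= theta eta gam a ->
  gam / 16 <= eta / INR n * rsum n (fun i => sg (al i * a + be i * b) * al i) ->
  gam * Rabs (b + eta / INR n * rsum n (fun i => sg (al i * a + be i * b) * be i))
    <= a + eta / INR n * rsum n (fun i => sg (al i * a + be i * b) * al i) ->
  - (b + eta / INR n * rsum n (fun i => sg (al i * a + be i * b) * be i))
    <= theta eta gam (a + eta / INR n * rsum n (fun i => sg (al i * a + be i * b) * al i)).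
Proof.
  intros Hn Hal Hbe Hab Hb Hinc Hinv.
  assert (E1 : rsum n (fun i => sg (al i * a + be i * b) * al i) = rsum n (fun i => sg (al i * a + (fun j => - be j) i * - b) * al i)).
  { apply rsum_ext. intros i _. f_equal. f_equal. ring. }
  assert (E2 : - rsum n (fun i => sg (al i * a + be i * b) * be i) = rsum n (fun i => sg (al i * a + (fun j => - be j) i * - b) * (fun j => - be j) i)).
  { rewrite <- (Rmult_1_l (rsum _ _)), Ropp_mult_distr_l, <- rsum_scal. apply rsum_ext. intros i _.
    replace (al i * a + - be i * - b) with (al i * a + be i * b) by ring. ring. }
  replace (- (b + eta / INR n * rsum n (fun i => sg (al i * a + be i * b) * be i))) with
    (- b + eta / INR n * (- rsum n (fun i => sg (al i * a + be i * b) * be i))) by ring.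
  rewrite E1, E2. rewrite E1 in Hinc, Hinv.
  apply core_up; auto.
  - intros i Hi. rewrite Rabs_Ropp. auto.
  - rewrite Rabs_Ropp. auto.
  - rewrite <- E2. rewrite <- Rabs_Ropp. replace (- (- b + eta / INR n * - rsum n (fun i => sg (al i * a + be i * b) * be i)))
      with (b + eta / INR n * rsum n (fun i => sg (al i * a + be i * b) * be i)) by ring. auto.
Qed.



Lemma dot_comm u v : dot u v = dot v u.
Proof. unfold dot; ring. Qed.

Lemma step_dot n x grad (Hgrad : is_gradient (logistic_risk n x) grad) (eta : R) (u Y : vec2) :
  dot (vsub u (vscale eta (grad u))) Y = dot u Y + eta / INR n * rsum n (fun i => sg (dot u (x i)) * dot Y (x i)).
Proof.
  unfold vsub, vscale. unfold dot at 1. simpl. rewrite (grad_fst n x grad Hgrad), (grad_snd n x grad Hgrad).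
  assert (E : rsum n (fun i => sg (dot u (x i)) * dot Y (x i)) =
     (- fst Y) * rsum n (fun i => - fst (x i) * sg (dot u (x i))) + (- snd Y) * rsum n (fun i => - snd (x i) * sg (dot u (x i)))).
  { rewrite <- !rsum_scal, <- rsum_plus. apply rsum_ext. intros i _. unfold dot at 2. ring. }
  rewrite E. unfold dot. unfold Rdiv. ring.
Qed.

Lemma G_lower n x (u : vec2) eta : (0 < n)%nat -> 0 < eta -> INR n <= eta ->
  logistic_risk n x u > / (8 * eta) -> INR n / (16 * eta) <= rsum n (fun i => sg (dot u (x i))).
Proof.
  intros Hn He Hne HF. assert (0 < INR n) by (apply lt_0_INR; lia).
  assert (Hsmall : INR n / (16 * eta) <= / 16).
  { apply Rmult_le_reg_r with (16 * eta); [lra|]. unfold Rdiv. rewrite Rmult_assoc, Rinv_l by lra. field_simplify; lra. }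
  destruct (classic (exists j, (j < n)%nat /\ dot u (x j) < 0)) as [[j [Hj Hz]] | Hno].
  - pose proof (rsum_ge_term n (fun i => sg (dot u (x i))) j (fun i _ => Rlt_le _ _ (sg_pos _)) Hj).
    pose proof (sg_ge_half (dot u (x j)) (Rlt_le _ _ Hz)). simpl in H0. lra.
  - assert (Hall : forall i, (i < n)%nat -> ln (1 + exp (- dot u (x i))) / 2 <= sg (dot u (x i))).
    { intros i Hi. apply sg_ge_loss. destruct (Rle_dec 0 (dot u (x i))); auto. exfalso; apply Hno. exists i. split; auto; lra. }
    pose proof (rsum_le _ _ _ Hall).
    assert (E : rsum n (fun i => ln (1 + exp (- dot u (x i))) / 2) = / 2 * rsum n (fun i => ln (1 + exp (- dot u (x i))))).
    { rewrite <- rsum_scal. apply rsum_ext. intros; unfold Rdiv; ring. }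
    rewrite E in H0. unfold logistic_risk in HF.
    set (S := rsum n _) in *.
    assert (INR n / (8 * eta) < S).
    { apply Rmult_lt_reg_l with (/ INR n). apply Rinv_0_lt_compat; lra.
      replace (/ INR n * (INR n / (8 * eta))) with (/ (8 * eta)) by (field; lra). lra. }
    assert (INR n / (16 * eta) = / 2 * (INR n / (8 * eta))) by (field; lra). lra.
Qed.

Lemma Rabs_le_inv x y : Rabs x <= y -> -y <= x <= y.
Proof. unfold Rabs; destruct (Rcase_abs x); lra. Qed.


Theorem lemma6
  (n : nat) (x : nat -> vec2)
  (Hn : (0 < n)%nat)
  (Hx : forall i, (i < n)%nat -> vnorm (x i) <= 1)
  (Hsep : exists u : vec2, forall i, (i < n)%nat -> dot u (x i) > 0)
  (gamma : R) (wstar vstar : vec2)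
  (Hmax : is_max_margin n x wstar gamma)
  (Hv1 : vnorm vstar = 1) (Hvorth : dot vstar wstar = 0)
  (grad : vec2 -> vec2) (Hgrad : is_gradient (logistic_risk n x) grad)
  (eta : R) (Heta_pos : 0 < eta)
  (w : nat -> vec2)
  (Hw0 : w O = vzero)
  (HwS : forall t, w (S t) = vsub (w t) (vscale eta (grad (w t))))
  (Heta : Rmax (INR n) (32 / gamma ^ 2 * ln (256 / gamma ^ 2)) <= eta) :
  forall t : nat,
    (forall s, (s <= t)%nat -> logistic_risk n x (w s) > / (8 * eta)) ->
    Rabs (dot (w t) vstar) <= eta.
Proof.
  intros t Ht.
  destruct Hmax as [Hw1 [[Hmin1 [i0 [Hi0 Hi0eq]]] Hopt]].
  pose proof (vnorm1 _ Hw1) as WW. pose proof (vnorm1 _ Hv1) as VV.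
  pose proof (decomp wstar vstar WW VV Hvorth) as dec.
  set (al := fun i => dot wstar (x i)). set (be := fun i => dot vstar (x i)).
  assert (Hxb : forall i, (i < n)%nat -> al i ^ 2 + be i ^ 2 <= 1).
  { intros i Hi. pose proof (vnorm_le1 _ (Hx i Hi)). rewrite dec in H.
    unfold al, be. rewrite (dot_comm (x i) wstar), (dot_comm (x i) vstar) in H. simpl. lra. }
  assert (Hbe : forall i, (i < n)%nat -> Rabs (be i) <= 1).
  { intros i Hi. specialize (Hxb i Hi). apply Rabs_le. split; nra. }
  assert (Hg1 : gamma <= 1).
  { specialize (Hxb i0 Hi0). unfold al in Hxb. rewrite Hi0eq in Hxb. nra. }
  assert (Hgpos : 0 < gamma).
  { destruct Hsep as [u Hu].
    assert (Hu0 : 0 < dot u (x 0%nat)) by (apply Hu; auto).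
    assert (Hd : 0 < dot u u).
    { destruct u as [u1 u2]. unfold dot in *; simpl in *.
      destruct (Req_dec u1 0); destruct (Req_dec u2 0); subst; try nra. }
    set (N := vnorm u).
    assert (HN : 0 < N) by (apply sqrt_lt_R0; auto).
    assert (HNN : N * N = dot u u) by (apply sqrt_sqrt; lra).
    set (u' := vscale (/ N) u).
    assert (Hu' : vnorm u' = 1).
    { unfold vnorm. replace (dot u' u') with 1. apply sqrt_1.
      unfold u', vscale, dot in *; simpl in *. transitivity ((/ N * / N) * (N * N)); [field; lra|]. rewrite HNN. ring. }
    destruct (min_exists (fun i => dot u' (x i)) n Hn) as [m [Hm1 [j [Hj Hmj]]]].
    assert (m <= gamma) by (apply (Hopt u' m Hu'); split; [exact Hm1| exists j; auto]).
    assert (0 < m).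
    { rewrite <- Hmj. unfold u', vscale, dot. simpl.
      replace (/ N * fst u * fst (x j) + / N * snd u * snd (x j)) with (/ N * dot u (x j)) by (unfold dot; ring).
      apply Rmult_lt_0_compat; [apply Rinv_0_lt_compat; auto| apply Hu; auto]. }
    lra. }
  assert (Hal : forall i, (i < n)%nat -> gamma <= al i) by (intros i Hi; apply Hmin1; auto).
  assert (Hne : INR n <= eta) by (eapply Rle_trans; [apply Rmax_l| eauto]).
  assert (HLe : 32 / gamma ^ 2 * ln (256 / gamma ^ 2) <= eta) by (eapply Rle_trans; [apply Rmax_r| eauto]).
  assert (Hg2 : 0 < gamma ^ 2) by (apply pow_lt; lra).
  assert (Hg21 : gamma ^ 2 <= 1) by (simpl; nra).
  assert (HL4 : 4 <= ln (256 / gamma ^ 2)).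
  { rewrite <- (ln_exp 4). apply ln_le; [apply exp_pos|].
    assert (exp 4 <= 81). { replace 4 with (1+1+1+1) by ring. rewrite !exp_plus. pose proof exp_le_3. pose proof (exp_pos 1).
      assert (exp 1 * exp 1 <= 9) by nra. nra. }
    assert (256 <= 256 / gamma ^ 2).
    { apply Rmult_le_reg_r with (gamma ^ 2); auto. unfold Rdiv. rewrite Rmult_assoc, Rinv_l by lra. nra. }
    lra. }
  assert (HK0 : 0 < 32 / gamma ^ 2) by (apply Rdiv_lt_0_compat; lra).
  assert (HK : 32 / gamma ^ 2 <= eta / 4) by nra.
  assert (He : 128 <= eta).
  { assert (32 <= 32 / gamma ^ 2).
    { apply Rmult_le_reg_r with (gamma ^ 2); auto. unfold Rdiv. rewrite Rmult_assoc, Rinv_l by lra. nra. }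
    lra. }
  assert (HKe : 32 / gamma ^ 2 <= exp (gamma ^ 2 * eta / 2)).
  { assert (HgL : ln (256 / gamma ^ 2) <= gamma ^ 2 * eta / 2).
    { assert (32 * ln (256 / gamma ^ 2) <= gamma ^ 2 * eta).
      { replace (32 * ln (256 / gamma ^ 2)) with (gamma ^ 2 * (32 / gamma ^ 2 * ln (256 / gamma ^ 2))) by (field; lra).
        apply Rmult_le_compat_l; lra. }
      lra. }
    assert (Hpos : 0 < 256 / gamma ^ 2) by (apply Rdiv_lt_0_compat; lra).
    apply Rle_trans with (256 / gamma ^ 2).
    - unfold Rdiv. apply Rmult_le_compat_r; [left; apply Rinv_0_lt_compat; auto| lra].
    - rewrite <- (exp_ln (256 / gamma ^ 2)) at 1 by auto.
      destruct (Req_dec (ln (256 / gamma ^ 2)) (gamma ^ 2 * eta / 2)) as [Q|Q]. rewrite Q; lra.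
      left. apply exp_increasing. lra. }
  set (A := fun s => dot (w s) wstar). set (B := fun s => dot (w s) vstar).
  assert (Hz : forall s i, dot (w s) (x i) = al i * A s + be i * B s).
  { intros s i. rewrite dec. unfold al, be, A, B. ring. }
  assert (HA : forall s, A (S s) = A s + eta / INR n * rsum n (fun i => sg (al i * A s + be i * B s) * al i)).
  { intros s. unfold A at 1. rewrite HwS, (step_dot n x grad Hgrad). fold (A s). f_equal. f_equal.
    apply rsum_ext. intros i _. rewrite Hz. reflexivity. }
  assert (HB : forall s, B (S s) = B s + eta / INR n * rsum n (fun i => sg (al i * A s + be i * B s) * be i)).
  { intros s. unfold B at 1. rewrite HwS, (step_dot n x grad Hgrad). fold (B s). f_equal. f_equal.
    apply rsum_ext. intros i _. rewrite Hz. reflexivity. }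
  assert (Inv : forall s, (s <= t)%nat ->
            gamma * Rabs (B s) <= A s /\ B s <= theta eta gamma (A s) /\ - B s <= theta eta gamma (A s)).
  { induction s as [|s IH]; intros Hs.
    - unfold A, B. rewrite Hw0. unfold vzero, dot, theta; simpl.
      replace (0 * fst wstar + 0 * snd wstar) with 0 by ring.
      replace (0 * fst vstar + 0 * snd vstar) with 0 by ring.
      rewrite Rabs_R0, Ropp_0. rewrite Rmult_0_r, Ropp_0, exp_0. replace (gamma * (gamma * 1)) with (gamma ^ 2) by (simpl; ring). lra.
    - destruct (IH ltac:(lia)) as [I1 [I2 I3]].
      assert (HF := Ht s ltac:(lia)).
      pose proof (G_lower n x (w s) eta Hn Heta_pos Hne HF) as HG.
      assert (HGz : INR n / (16 * eta) <= rsum n (fun i => sg (al i * A s + be i * B s))).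
      { eapply Rle_trans; [exact HG|]. right. apply rsum_ext. intros i _. rewrite Hz. auto. }
      set (SG := rsum n (fun i => sg (al i * A s + be i * B s))) in *.
      set (SA := rsum n (fun i => sg (al i * A s + be i * B s) * al i)).
      set (SB := rsum n (fun i => sg (al i * A s + be i * B s) * be i)).
      assert (HSA : gamma * SG <= SA).
      { unfold SG, SA. rewrite <- rsum_scal. apply rsum_le. intros i Hi.
        pose proof (sg_pos (al i * A s + be i * B s)). specialize (Hal i Hi). nra. }
      assert (HSB1 : SB <= SG).
      { apply rsum_le. intros i Hi. pose proof (sg_pos (al i * A s + be i * B s)).
        specialize (Hbe i Hi). apply Rabs_le_inv in Hbe. nra. }
      assert (HSB2 : - SG <= SB).
      { unfold SG. rewrite <- (Rmult_1_l (rsum _ _)), Ropp_mult_distr_l, <- rsum_scal. apply rsum_le. intros i Hi.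
        pose proof (sg_pos (al i * A s + be i * B s)).
        specialize (Hbe i Hi). apply Rabs_le_inv in Hbe. nra. }
      assert (Hn0 : 0 < INR n) by (apply lt_0_INR; lia).
      assert (Hc : 0 < eta / INR n) by (apply Rdiv_lt_0_compat; lra).
      assert (Hinc : gamma / 16 <= eta / INR n * SA).
      { apply Rle_trans with (eta / INR n * (gamma * (INR n / (16 * eta)))).
        - right. field. lra.
        - apply Rmult_le_compat_l; [lra|]. nra. }
      assert (Hinv : gamma * Rabs (B s + eta / INR n * SB) <= A s + eta / INR n * SA).
      { pose proof (Rabs_triang (B s) (eta / INR n * SB)). rewrite Rabs_mult, (Rabs_right (eta / INR n)) in H by lra.
        assert (Rabs SB <= SG) by (apply Rabs_le; lra).
        assert (gamma * (eta / INR n * Rabs SB) <= eta / INR n * SA).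
        { replace (gamma * (eta / INR n * Rabs SB)) with (eta / INR n * (gamma * Rabs SB)) by ring.
          apply Rmult_le_compat_l; [lra|]. nra. }
        nra. }
      rewrite HA, HB. fold SA SB. split; [exact Hinv|]. split.
      + apply core_up; auto.
      + apply core_down; auto. }
  destruct (Inv t (Nat.le_refl t)) as [_ [I2 I3]].
  unfold theta in I2, I3. pose proof (exp_pos (- (gamma * A t))).
  assert (0 < 32 / gamma ^ 2 * exp (- (gamma * A t))) by (apply Rmult_lt_0_compat; auto).
  fold (B t). apply Rabs_le. lra.
Qed.
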